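(* Consider the problem and algorithm AC2CD described in the context, let $\{x^k\}$ be a sequence produced by AC2CD, and assume $\lim_{k\to\infty}x^k=x^*$, where $x^*$ is a stationary point with multiplier $\lambda^*$ and $\mathcal A^+(x^* )\neq\emptyset$. Let $\zeta(x^* )=\min_{i\in\mathcal A^+(x^* )}|\nabla_i f(x^* )-\lambda^*|>0$. Let $k_A$ be the first outer iteration such that \[ \|z^{k,i}-x^*\|<\frac{\zeta(x^* )}{2L+\max\bigl\{\frac1{A_l},\frac{L^{\max}}{2(1-\gamma)}\bigr\}},\quad i=1,\dots,n,\quad\text{for all }k\ge k_A. \] Let $k_j$ be the first outer iteration such that $j(k)\notin\mathcal A(x^* )$ for all $k\ge k_j$, let $k_z$ be the first outer iteration such that $l_{j(k)}<z^{k,i}_{j(k)}<u_{j(k)}$ for $i=1,\dots,n+1$ and all $k\ge k_z$, and assume $k_A\ge\max\{k_j,k_z\}$. Then for all $k>k_A$, \[ x^k_h=x^*_h\quad\text{for all } h\in\mathcal A^+(x^* ). \]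
   Context: Problem: minimize $f(x)$ subject to $e^T x = b$ and $l_i \le x_i \le u_i$ ($i=1,\dots,n$), where $n\ge 2$, $e$ is the all-ones vector, $b\in\mathbb{R}$, $l_i\in\mathbb{R}\cup\{-\infty\}$, $u_i\in\mathbb{R}\cup\{+\infty\}$, $l_i<u_i$, and $f:\mathbb{R}^n\to\mathbb{R}$ is continuously differentiable with $\nabla f$ Lipschitz continuous on $\mathbb{R}^n$ with constant $L$. $\mathcal F$ is the feasible set, $e_i$ the $i$th unit vector. For $i\ne j$, $L_{i,j}>0$ are fixed constants such that for every $x\in\mathbb{R}^n$ and $s,t\in\mathbb{R}$, $|\nabla f(x+s(e_i-e_j))^T(e_i-e_j)-\nabla f(x+t(e_i-e_j))^T(e_i-e_j)|\le L_{i,j}|s-t|$; $L_{i,i}=0$; $L^{\max}=\max_{i,j}L_{i,j}$. For $x\in\mathcal F$, $D_h(x)=\min\{x_h-l_h,u_h-x_h\}$. A point $x^*\in\mathcal F$ is stationary iff there is $\lambda^*\in\mathbb{R}$ with $\nabla_i f(x^* )\ge\lambda^*$ if $x^*_i=l_i$, $=\lambda^*$ if $l_i<x^*_i<u_i$, $\le\lambda^*$ if $x^*_i=u_i$ (the limit of an AC2CD sequence is stationary under the standing assumptions). Active set $\mathcal A(x^* )=\{i:x^*_i=l_i\}\cup\{i:x^*_i=u_i\}$ and $\mathcal A^+(x^* )=\mathcal A(x^* )\cap\{i:\nabla_if(x^* )\ne\lambda^*\}$. Algorithm AC2CD with parameters $\tau\in(0,1]$, $\gamma,\delta\in(0,1)$,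 $0<A_l\le A_u<\infty$ and starting point $x^0\in\mathcal F$: for $k=0,1,2,\dots$: let $D^k=\max_h D_h(x^k)$; choose $j(k)$ with $D_{j(k)}(x^k)\ge\tau D^k$; choose a permutation $(p^k_1,\dots,p^k_n)$ of $\{1,\dots,n\}$; set $z^{k,1}=x^k$; for $i=1,\dots,n$ (inner iteration $(k,i)$): $g^{k,i}=\nabla_{j(k)}f(z^{k,i})-\nabla_{p^k_i}f(z^{k,i})$, $d^{k,i}=g^{k,i}(e_{p^k_i}-e_{j(k)})$; $\bar\alpha^{k,i}=\min\{u_{p^k_i}-z^{k,i}_{p^k_i},z^{k,i}_{j(k)}-l_{j(k)}\}/g^{k,i}$ if $g^{k,i}>0$, $=\min\{z^{k,i}_{p^k_i}-l_{p^k_i},u_{j(k)}-z^{k,i}_{j(k)}\}/|g^{k,i}|$ if $g^{k,i}<0$, $=0$ if $g^{k,i}=0$; choose $A^{k,i}\in[A_l,A_u]$, set $\Delta^{k,i}=\min\{\bar\alpha^{k,i},A^{k,i}\}$; starting from $\alpha=\Delta^{k,i}$, while $f(z^{k,i}+\alpha d^{k,i})>f(z^{k,i})+\gamma\alpha\nabla f(z^{k,i})^Td^{k,i}$ replace $\alpha$ by $\delta\alpha$; $\alpha^{k,i}$ is the final $\alpha$ and $z^{k,i+1}=z^{k,i}+\alpha^{k,i}d^{k,i}$. Then $x^{k+1}=z^{k,n+1}$. Standing assumptions: $\mathcal L_0=\{x\in\mathcal F: f(x)\le f(x^0)\}$ is nonempty and compact, and every $x\in\mathcal L_0$ has some index $i$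 with $l_i<x_i<u_i$. *)

(* Defs.v *)
From mathcomp Require Import all_boot all_order all_algebra all_fingroup.
From mathcomp Require Import all_classical all_reals all_analysis.
Set Implicit Arguments. Unset Strict Implicit. Unset Printing Implicit Defensive.
Import Order.TTheory GRing.Theory Num.Theory.
Import numFieldNormedType.Exports.
Local Open Scope ring_scope.
Local Open Scope classical_set_scope.

Section AC2CD.
Context {R : realType} {n : nat}.

Definition vec := 'I_n -> R.

Definition unitv (i : 'I_n) : vec := fun h => (h == i)%:R.

Definition enorm (x : vec) : R := Num.sqrt (\sum_(h < n) x h ^+ 2).

Definition vsub (x y : vec) : vec := fun h => x h - y h.

Definition vaxpy (x : vec) (a : R) (d : vec) : vec := fun h => x h + a * d h.

Definition dotv (x y : vec) : R := \sum_(h < n) x h * y h.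

(* compactness in R^n (product topology = Euclidean topology) *)
Definition compactRn (A : set vec) : Prop :=
  compact (A : set {ptws 'I_n -> (R : topologicalType)}).

Definition is_gradient (f : vec -> R) (g : vec -> vec) : Prop :=
  forall (x : vec) (i : 'I_n),
    is_derive (0 : R) (1 : R) (fun t : R => f (vaxpy x t (unitv i))) (g x i).

Definition lipschitz_grad (g : vec -> vec) (L : R) : Prop :=
  forall x y : vec, enorm (vsub (g x) (g y)) <= L * enorm (vsub x y).

Definition pair_lipschitz (g : vec -> vec) (Lij : 'I_n -> 'I_n -> R) : Prop :=
  (forall i j, i != j -> 0 < Lij i j) /\ (forall i, Lij i i = 0) /\
  forall (i j : 'I_n) (x : vec) (s t : R),
    let dij := fun h => unitv i h - unitv j h in
    `| dotv (g (vaxpy x s dij)) dij - dotv (g (vaxpy x t dij)) dij |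
      <= Lij i j * `|s - t|.

Definition Lmax (Lij : 'I_n -> 'I_n -> R) : R :=
  \big[Num.max/0]_(i < n) \big[Num.max/0]_(j < n) Lij i j.

Definition valid_bounds (l u : 'I_n -> \bar R) : Prop :=
  forall i, [/\ l i != +oo%E, u i != -oo%E & (l i < u i)%E].

Definition feasible (l u : 'I_n -> \bar R) (b : R) (x : vec) : Prop :=
  \sum_(h < n) x h = b /\ forall h, (l h <= (x h)%:E <= u h)%E.

Definition Dh (l u : 'I_n -> \bar R) (x : vec) (h : 'I_n) : \bar R :=
  Order.min ((x h)%:E - l h)%E (u h - (x h)%:E)%E.

Definition Dmax (l u : 'I_n -> \bar R) (x : vec) : \bar R :=
  \big[Order.max/-oo%E]_(h < n) Dh l u x h.

Definition level0 (f : vec -> R) (l u : 'I_n -> \bar R) (b : R) (x0 : vec) : set vec :=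
  [set y | feasible l u b y /\ f y <= f x0].

Definition gdir (g : vec -> vec) (z : vec) (j p : 'I_n) : R := g z j - g z p.
Definition ddir (g : vec -> vec) (z : vec) (j p : 'I_n) : vec :=
  fun h => gdir g z j p * (unitv p h - unitv j h).

(* the maximal feasible stepsize \bar alpha^{k,i} (possibly +oo) *)
Definition alpha_bar (l u : 'I_n -> \bar R) (g : vec -> vec) (z : vec) (j p : 'I_n)
  : \bar R :=
  let gg := gdir g z j p in
  if 0 < gg then
    (Order.min (u p - (z p)%:E) ((z j)%:E - l j) * (gg^-1)%:E)%E
  else if gg < 0 then
    (Order.min ((z p)%:E - l p) (u j - (z j)%:E) * (`|gg|^-1)%:E)%E
  else 0%E.

Definition armijo (f : vec -> R) (g : vec -> vec) (gamma : R) (z d : vec) (a : R)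
  : Prop := f (vaxpy z a d) <= f z + gamma * a * dotv (g z) d.

(* The sequences x (outer iterates), j (working indices), p (permutations),
   z (inner iterates, z k i for i = 0..n, paper's z^{k,i+1}),
   A (trial bounds A^{k,i}) and alpha (accepted stepsizes) are produced by
   AC2CD with parameters tau, gamma, delta, A_l, A_u.
   Inner iteration i : 'I_n here is the paper's inner iteration i+1. *)
Definition AC2CD_seq (f : vec -> R) (g : vec -> vec) (l u : 'I_n -> \bar R)
  (tau gamma delta Al Au : R)
  (x : nat -> vec) (j : nat -> 'I_n) (p : nat -> {perm 'I_n})
  (z : nat -> nat -> vec) (A : nat -> 'I_n -> R) (alpha : nat -> 'I_n -> R)
  : Prop :=
  (forall k, (tau%:E * Dmax l u (x k) <= Dh l u (x k) (j k))%E) /\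
  (forall k, z k 0%N = x k) /\
  (forall k (i : 'I_n),
     let zi := z k i in
     let q := p k i in
     let d := ddir g zi (j k) q in
     let Delta := fine (Order.min (alpha_bar l u g zi (j k) q) (A k i)%:E) in
     [/\ Al <= A k i <= Au,
        (exists m : nat,
           [/\ alpha k i = Delta * delta ^+ m,
               armijo f g gamma zi d (Delta * delta ^+ m) &
               forall m' : nat, (m' < m)%N -> ~ armijo f g gamma zi d (Delta * delta ^+ m')])
      & z k i.+1 = vaxpy zi (alpha k i) d]) /\
  (forall k, x k.+1 = z k n).

Definition stationary (g : vec -> vec) (l u : 'I_n -> \bar R) (b : R) (xs : vec) (lam : R)
  : Prop :=
  feasible l u b xs /\
  forall i,
    [/\ (xs i)%:E = l i -> lam <= g xs i,
        (l i < (xs i)%:E < u i)%E -> g xs i = lam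
      & (xs i)%:E = u i -> g xs i <= lam].

Definition active (l u : 'I_n -> \bar R) (xs : vec) (i : 'I_n) : bool :=
  ((xs i)%:E == l i) || ((xs i)%:E == u i).
Definition active_plus (g : vec -> vec) (l u : 'I_n -> \bar R) (xs : vec) (lam : R)
  (i : 'I_n) : bool :=
  active l u xs i && (g xs i != lam).

Definition first_such (P : nat -> Prop) (m : nat) : Prop :=
  P m /\ forall m', (m' < m)%N -> ~ P m'.

End AC2CD.

(* Main.v *)
Require Import Defs.
From mathcomp Require Import all_boot all_order all_algebra all_fingroup.
From mathcomp Require Import all_classical all_reals all_analysis.
From mathcomp Require Import ring lra.
Import Order.TTheory GRing.Theory Num.Theory.
Import numFieldNormedType.Exports.
Local Open Scope ring_scope.
Local Open Scope classical_set_scope.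

Section S.
Context {R : realType} {n : nat}.
Implicit Types (w y : @vec R n).

Lemma vaxpyA w t s (e : @vec R n) : vaxpy (vaxpy w t e) s e = vaxpy w (s + t) e.
Proof. apply/funext => h; rewrite /vaxpy; ring. Qed.

Lemma shift_is_derive (F G : R -> R) (t0 d : R) :
  is_derive (0:R) (1:R) G d -> (forall s, F (s + t0) = G s) -> is_derive t0 (1:R) F d.
Proof.
move=> [dG vG] FG.
have E : (fun h : R => h^-1 *: ((F \o shift t0) (h *: 1) - F t0)) =
         (fun h : R => h^-1 *: ((G \o shift 0) (h *: 1) - G 0)).
  apply/funext => h /=.
  have -> : F t0 = G 0 by rewrite -FG add0r.
  by rewrite /shift /= addr0 FG.
split; first by rewrite /derivable E.
by rewrite /derive E.
Qed.

Lemma enorm_ge0 w : 0 <= enorm w.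
Proof. exact: sqrtr_ge0. Qed.

Lemma abs_coord_le (a : @vec R n) i : `|a i| <= enorm a.
Proof.
rewrite /enorm -(sqrtr_sqr (a i)).
apply: ler_wsqrtr.
rewrite (bigD1 i) //= lerDl.
by apply: sumr_ge0 => k _; rewrite sqr_ge0.
Qed.

Lemma enorm_unit t i : enorm (fun h => t * @unitv R n i h) = `|t|.
Proof.
rewrite /enorm (bigD1 i) //= big1 ?addr0.
  by rewrite /unitv eqxx mulr1 sqrtr_sqr.
by move=> k ki; rewrite /unitv (negbTE ki) mulr0 expr0n.
Qed.


Variables (f : @vec R n -> R) (g : @vec R n -> @vec R n) (L : R).
Hypothesis Hg : is_gradient f g.
Hypothesis HL : lipschitz_grad g L.
Hypothesis L0 : 0 <= L.

Lemma coord_deriv w i t :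
  is_derive t (1:R) (fun s => f (vaxpy w s (unitv i))) (g (vaxpy w t (unitv i)) i).
Proof.
apply: (shift_is_derive _ _ _ _ (Hg (vaxpy w t (unitv i)) i)) => s.
by rewrite vaxpyA.
Qed.

Lemma coord_mvt w i a b' : a < b' -> exists2 c, a < c < b' &
  f (vaxpy w b' (unitv i)) - f (vaxpy w a (unitv i)) = g (vaxpy w c (unitv i)) i * (b' - a).
Proof.
move=> ab.
have [c cab E] := @MVT R (fun s => f (vaxpy w s (unitv i)))
   (fun t => g (vaxpy w t (unitv i)) i) a b' ab (fun t _ => coord_deriv w i t)
   (derivable_within_continuous (fun t _ => @ex_derive _ _ _ _ _ _ _ (coord_deriv w i t))).
by exists c => //; move: cab; rewrite in_itv.
Qed.

Lemma vaxpy0 w (e : @vec R n) : vaxpy w 0 e = w.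
Proof. by apply/funext => h; rewrite /vaxpy mul0r addr0. Qed.

Lemma vsub_vaxpy w t i : vsub (vaxpy w t (unitv i)) w = (fun h => t * unitv i h).
Proof. by apply/funext => h; rewrite /vsub /vaxpy addrC addKr. Qed.

Lemma grad_coord_lip y y' i : `|g y i - g y' i| <= L * enorm (vsub y y').
Proof.
apply: le_trans (HL y y').
exact: (abs_coord_le (vsub (g y) (g y')) i).
Qed.

Lemma coord_bound w i h :
  `|f (vaxpy w h (unitv i)) - f w - h * g w i| <= L * h ^+ 2.
Proof.
have key c : `|g (vaxpy w c (unitv i)) i - g w i| <= L * `|c|.
  by rewrite -(enorm_unit c i) -(vsub_vaxpy w); apply: grad_coord_lip.
case: (ltgtP h 0) => [hlt|hgt|->]; last first.
- by rewrite vaxpy0 subrr mul0r subr0 normr0 expr0n /= mulr0.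
- have [c /andP[c0 ch] E] := coord_mvt w i 0 h hgt.
  move: E; rewrite vaxpy0 subr0 => ->.
  rewrite (mulrC h) -mulrBl normrM (gtr0_norm hgt) expr2 mulrA.
  apply: ler_wpM2r; first exact: ltW.
  apply: le_trans (key c) _; apply: ler_wpM2l => //.
  by rewrite gtr0_norm // ltW.
- have [c /andP[hc c0] E] := coord_mvt w i h 0 hlt.
  move: E; rewrite vaxpy0 sub0r => E.
  have -> : f (vaxpy w h (unitv i)) - f w - h * g w i =
            - (f w - f (vaxpy w h (unitv i)) - (- h) * g w i) by ring.
  rewrite normrN E (mulrC (- h)) -mulrBl normrM normrN (ltr0_norm hlt) -sqrrN expr2 mulrA.
  apply: ler_wpM2r; first by rewrite oppr_ge0 ltW.
  apply: le_trans (key c) _; apply: ler_wpM2l => //.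
  by rewrite ltr0_norm // lerN2 ltW.
Qed.


Definition dab (a b : 'I_n) : @vec R n := fun k => unitv a k - unitv b k.

Lemma dotv_dab (v : @vec R n) a b : a != b -> dotv v (dab a b) = v a - v b.
Proof.
move=> ab; rewrite /dotv /dab (bigD1 a) //= (bigD1 b) 1?eq_sym //= big1.
  rewrite /unitv eqxx (negbTE ab) eq_sym (negbTE ab) addr0 eqxx /=; ring.
move=> k /andP[ka kb]; by rewrite /unitv (negbTE ka) (negbTE kb) subrr mulr0.
Qed.

Lemma pair_step y a b h : a != b ->
  f (vaxpy y h (dab a b)) - f y - h * (g y a - g y b) <= 3%:R * L * h ^+ 2.
Proof.
move=> ab.
set w := vaxpy y (- h) (unitv b).
have -> : vaxpy y h (dab a b) = vaxpy w h (unitv a).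
  by apply/funext => k; rewrite /w /vaxpy /dab; ring.
have B1 := coord_bound w a h.
have B2 := coord_bound y b (- h).
have B3 : `|h * (g w a - g y a)| <= L * h ^+ 2.
  rewrite normrM.
  have := grad_coord_lip w y a; rewrite /w vsub_vaxpy enorm_unit normrN => H.
  have -> : L * h ^+ 2 = `|h| * (L * `|h|).
    by rewrite [RHS]mulrCA -expr2 real_normK // num_real.
  by apply: ler_wpM2l.
rewrite sqrrN in B2.
set T1 := f (vaxpy w h (unitv a)) - f w - h * g w a in B1.
set T2 := f w - f y - - h * g y b in B2.
have -> : f (vaxpy w h (unitv a)) - f y - h * (g y a - g y b) =
   T1 + T2 + h * (g w a - g y a) by rewrite /T1 /T2; ring.
apply: le_trans (ler_norm _) _.
apply: le_trans (ler_normD _ _) _.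
apply: le_trans (lerD (ler_normD _ _) (lexx _)) _.
have -> : 3%:R * L * h ^+ 2 = L * h ^+ 2 + L * h ^+ 2 + L * h ^+ 2 by ring.
by apply: lerD => //; apply: lerD.
Qed.


Variable Lij : 'I_n -> 'I_n -> R.
Hypothesis HLij : forall (a b : 'I_n) y s t,
  `|dotv (g (vaxpy y s (dab a b))) (dab a b) - dotv (g (vaxpy y t (dab a b))) (dab a b)|
     <= Lij a b * `|s - t|.

Lemma descent y a b s : a != b -> 0 <= s ->
  f (vaxpy y s (dab a b)) <= f y + s * (g y a - g y b) + Lij a b / 2%:R * s ^+ 2.
Proof.
move=> ab s0.
set psi := fun t => g (vaxpy y t (dab a b)) a - g (vaxpy y t (dab a b)) b.
have Lab0 : 0 <= Lij a b.
  have := HLij a b y 1 0; rewrite subr0 normr1 mulr1; apply: le_trans; exact: normr_ge0.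
have psib t : 0 <= t -> psi t <= psi 0 + Lij a b * t.
  move=> t0; have := HLij a b y t 0; rewrite !dotv_dab // subr0 (ger0_norm t0).
  rewrite -/(psi t) -/(psi 0) => H.
  by rewrite -lerBlDl; apply: le_trans (ler_norm _) H.
have P h m : 0 <= h ->
  2%:R * (f (vaxpy y (m%:R * h) (dab a b)) - f y - m%:R * h * psi 0) <=
  Lij a b * h ^+ 2 * (m%:R * (m%:R - 1)) + 6%:R * L * h ^+ 2 * m%:R.
  move=> h0; elim: m => [|m IH].
    rewrite (_ : vaxpy y (0%:R * h) (dab a b) = y); last by apply/funext=> k; rewrite /vaxpy; ring.
    have -> : (0%:R : R) = 0 by []. lra.
  have st := pair_step (vaxpy y (m%:R * h) (dab a b)) a b h ab.
  rewrite vaxpyA in st.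
  have pb := psib (m%:R * h) (mulr_ge0 (ler0n _ _) h0).
  rewrite /psi vaxpy0 in pb.
  rewrite /psi vaxpy0 in IH.
  rewrite /psi vaxpy0.
  rewrite (_ : h + m%:R * h = m.+1%:R * h) in st; last by rewrite -addn1 natrD; ring.
  set Fm := f (vaxpy y (m%:R * h) (dab a b)) in st IH.
  set Fm1 := f (vaxpy y (m.+1%:R * h) (dab a b)) in st *.
  set G0 := g y a - g y b in pb IH *.
  set Gm := g (vaxpy y (m%:R * h) (dab a b)) a - g (vaxpy y (m%:R * h) (dab a b)) b in st pb.
  rewrite -addn1 natrD.
  have hp : h * Gm <= h * G0 + Lij a b * m%:R * h ^+ 2.
    have := ler_wpM2l h0 pb; rewrite mulrDr; move/le_trans; apply.
    by rewrite le_eqVlt; apply/orP; left; apply/eqP; ring.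
  nra.
set F := f (vaxpy y s (dab a b)).
set E := 2%:R * (F - f y - s * (g y a - g y b)) - Lij a b * s ^+ 2.
have key N : (0 < N)%N -> E * N%:R <= 6%:R * L * s ^+ 2.
  move=> N0.
  have N0' : (0 : R) < N%:R by rewrite ltr0n.
  set q := s / N%:R.
  have sq : s = N%:R * q by rewrite /q mulrC divfK // gt_eqF.
  have q0 : 0 <= q by rewrite /q divr_ge0 // ltW.
  have := P q N q0; rewrite /psi vaxpy0 -sq -/F => HP.
  have HP' := ler_wpM2r (ltW N0') HP.
  rewrite /E sq.
  have LL : 0 <= Lij a b * q ^+ 2 * N%:R ^+ 2 by rewrite mulr_ge0 // ?mulr_ge0 // ?sqr_ge0.
  rewrite sq in HP'.
  nra.
suff : E <= 0 by rewrite /E subr_le0 => H; lra.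
rewrite leNgt; apply/negP => E0.
set K := 6%:R * L * s ^+ 2 / E.
have K0 : 0 <= K by rewrite /K; apply: divr_ge0; [apply: mulr_ge0; [apply: mulr_ge0 => //|apply: sqr_ge0]|exact: ltW].
have Kb := archi_boundP K0.
have := key (Num.bound K).+1 isT.
move=> HK.
have KE : K * E = 6%:R * L * s ^+ 2 by rewrite /K divfK // gt_eqF.
have : (Num.bound K)%:R < (Num.bound K).+1%:R :> R by rewrite ltr_nat.
set N1 := (Num.bound K).+1%:R in HK *.
set N0 := (Num.bound K)%:R in Kb *.
move=> NN.
have : 0 < E * (N1 - K) by rewrite mulr_gt0 // subr_gt0; lra.
nra.
Qed.


Lemma dotv_scale (v : @vec R n) c (w : @vec R n) : dotv v (fun k => c * w k) = c * dotv v w.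
Proof. by rewrite /dotv mulr_sumr; apply: eq_bigr => k _; ring. Qed.

Lemma armijo_ok zi a b c D gamma : a != b -> 0 < c -> 0 <= D ->
  Lij a b * D <= 2%:R * (1 - gamma) ->
  g zi a - g zi b = - c ->
  armijo f g gamma zi (fun k => c * dab a b k) D.
Proof.
move=> ab c0 D0 LD gab.
rewrite /armijo dotv_scale dotv_dab // gab.
have -> : vaxpy zi D (fun k => c * dab a b k) = vaxpy zi (D * c) (dab a b).
  by apply/funext => k; rewrite /vaxpy; ring.
have := descent zi a b (D * c) ab (mulr_ge0 D0 (ltW c0)); rewrite gab => H.
apply: le_trans H _.
have Lab0 : 0 <= Lij a b.
  have := HLij a b zi 1 0; rewrite subr0 normr1 mulr1; apply: le_trans; exact: normr_ge0.
have cc : 0 <= D * c ^+ 2 by rewrite mulr_ge0 // sqr_ge0.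
have : D * c ^+ 2 * (Lij a b * D) <= D * c ^+ 2 * (2%:R * (1 - gamma)) by apply: ler_wpM2l.
nra.
Qed.

End S.

Section E.
Context {R : realType}.

Lemma ege0_cases (X : \bar R) : (0 <= X)%E -> X = +oo%E \/ exists2 x, 0 <= x & X = x%:E.
Proof. by case: X => [x||] //=; rewrite ?lee_fin => ?; [right; exists x|left]. Qed.

Lemma box_alpha_gen (M : \bar R) c A : (0 <= M)%E -> 0 < c -> 0 < A ->
  let D := fine (Order.min (M * (c^-1)%:E)%E A%:E) in
  [/\ 0 <= D, D <= A & ((D * c)%:E <= M)%E].
Proof.
move=> M0 c0 A0 /=.
have ci : 0 < c^-1 by rewrite invr_gt0.
case: (ege0_cases _ M0) => [->|[m m0 ->]].
  rewrite gt0_mulye ?lte_fin // minye /=; split => //; [exact: ltW| exact: leey].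
rewrite -EFinM -EFin_min /=; split.
- by rewrite le_min (ltW A0) andbT mulr_ge0 // ltW.
- by rewrite ge_min lexx orbT.
- rewrite lee_fin -(ler_pM2r ci) -mulrA divff ?gt_eqF // mulr1.
  by rewrite ge_min lexx.
Qed.

Lemma box_alpha (X Y : \bar R) c A : (0 <= X)%E -> (0 <= Y)%E -> 0 < c -> 0 < A ->
  let D := fine (Order.min (Order.min X Y * (c^-1)%:E)%E A%:E) in
  [/\ 0 <= D, D <= A, ((D * c)%:E <= X)%E & ((D * c)%:E <= Y)%E].
Proof.
move=> X0 Y0 c0 A0 /=.
have M0 : (0 <= Order.min X Y)%E by rewrite le_min X0 Y0.
have [D0 DA DM] := box_alpha_gen _ _ _ M0 c0 A0.
split => //; apply: le_trans DM _; by rewrite ge_min lexx ?orbT.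
Qed.

Lemma exact_alpha x (Y : \bar R) c A : 0 <= x -> (0 <= Y)%E -> 0 < c -> x / c <= A ->
  let D := fine (Order.min (Order.min x%:E Y * (c^-1)%:E)%E A%:E) in
  ((D * c)%:E < Y)%E -> D = x / c.
Proof.
move=> x0 Y0 c0 xA /=.
case: (ege0_cases _ Y0) => [->|[y y0 ->]].
  rewrite miney -EFinM -EFin_min /=.
  by move=> _; apply/min_idPl.
rewrite -EFin_min -EFinM -EFin_min /= lte_fin.
have mA : Num.min x y / c <= A.
  apply: le_trans xA; rewrite ler_pM2r ?invr_gt0 //.
  by rewrite ge_min lexx.
rewrite (min_idPl mA) divfK ?gt_eqF //.
by case: (leP x y) => _ //; rewrite ltxx.
Qed.


Lemma up_ok (U : \bar R) z t T : ((t%:E <= U - z%:E)%E) -> T <= t -> (((z + T)%:E <= U)%E).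
Proof.
case: U => [r||] //=; rewrite ?lee_fin => H1 H2; last by rewrite leey.
by rewrite -lerBrDl; apply: le_trans H1.
Qed.

Lemma lo_ok (Lb : \bar R) z t T : ((t%:E <= z%:E - Lb)%E) -> T <= t -> ((Lb <= (z - T)%:E)%E).
Proof.
case: Lb => [r||] //=; rewrite ?lee_fin => H1 H2; last by rewrite leNye.
by rewrite lerBrDr -lerBrDl; apply: le_trans H1.
Qed.

Lemma sub_ge0E (U : \bar R) z : ((z%:E <= U)%E) -> ((0 <= U - z%:E)%E).
Proof. by move=> H; rewrite sube_ge0 // orbT. Qed.

Lemma sub_ge0E' (Lb : \bar R) z : ((Lb <= z%:E)%E) -> ((0 <= z%:E - Lb)%E).
Proof. by move=> H; rewrite sube_ge0 // orbT. Qed.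


Lemma up_lt (U : \bar R) z t : (((z + t)%:E < U)%E) -> ((t%:E < U - z%:E)%E).
Proof.
case: U => [r||] //=; rewrite ?lte_fin => H; last by rewrite ltey.
by rewrite ltrBrDl.
Qed.

Lemma lo_lt (Lb : \bar R) z t : ((Lb < (z - t)%:E)%E) -> ((t%:E < z%:E - Lb)%E).
Proof.
case: Lb => [r||] //=; rewrite ?lte_fin => H; last by rewrite ltey.
by rewrite ltrBrDl -ltrBrDr.
Qed.

End E.

Section Box.
Context {R : realType} {n : nat}.

Definition Box (l u : 'I_n -> \bar R) (z : @vec R n) := forall h, ((l h <= (z h)%:E <= u h)%E).

Lemma ddir_val (g : @vec R n -> @vec R n) zi jj q h :
  ddir g zi jj q h = gdir g zi jj q * (unitv q h - unitv jj h).
Proof. by []. Qed.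

Lemma step_box (l u : 'I_n -> \bar R) (g : @vec R n -> @vec R n) (zi : @vec R n)
  (jj q : 'I_n) (A0 delta : R) (m : nat) :
  Box l u zi -> 0 < A0 -> 0 < delta < 1 ->
  Box l u (vaxpy zi (fine (Order.min (alpha_bar l u g zi jj q) A0%:E) * delta ^+ m)
                  (ddir g zi jj q)).
Proof.
move=> Bz A0p /andP[d0 d1] h.
rewrite /vaxpy ddir_val.
have dm0 : 0 <= delta ^+ m by rewrite exprn_ge0 // ltW.
have dm1 : delta ^+ m <= 1 by rewrite exprn_ile1 // ltW.
rewrite /alpha_bar; cbv zeta.
set gd := gdir g zi jj q.
case: (ltgtP gd 0) => [gn|gp|g0]; last first.
- by rewrite g0 !mul0r mulr0 addr0; apply: Bz.
- have qj : q != jj by apply: contraTneq gp => E; rewrite /gd /gdir E subrr ltxx.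
  have [D0 DA DX DY] := box_alpha _ _ _ _ (sub_ge0E _ _ (proj2 (andP (Bz q))))
     (sub_ge0E' _ _ (proj1 (andP (Bz jj)))) gp A0p.
  set D := fine _ in D0 DA DX DY *.
  have aD : D * delta ^+ m * gd <= D * gd.
    by rewrite ler_pM2r // ler_piMr.
  have a0 : 0 <= D * delta ^+ m * gd by rewrite !mulr_ge0 // ltW.
  have [hqE|hq] := eqVneq h q; first subst h.
    rewrite /unitv eqxx (negbTE qj) subr0 mulr1.
    have /andP[B1 B2] := Bz q.
    apply/andP; split.
      by apply: le_trans B1 _; rewrite lee_fin lerDl.
    by apply: up_ok DX _.
  have [hjE|hj] := eqVneq h jj; first subst h.
    rewrite /unitv eqxx eq_sym (negbTE qj) sub0r mulrN1 mulrN.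
    have /andP[B1 B2] := Bz jj.
    apply/andP; split.
      by apply: lo_ok DY _.
    by apply: le_trans B2; rewrite lee_fin lerBlDr lerDl.
  by rewrite /unitv (negbTE hq) (negbTE hj) subrr !mulr0 addr0; apply: Bz.
- have qj : q != jj by apply: contraTneq gn => E; rewrite /gd /gdir E subrr ltxx.

  have ga : 0 < `|gd| by rewrite normr_gt0 lt_eqF.
  have [D0 DA DX DY] := box_alpha _ _ _ _ (sub_ge0E' _ _ (proj1 (andP (Bz q))))
     (sub_ge0E _ _ (proj2 (andP (Bz jj)))) ga A0p.
  set D := fine _ in D0 DA DX DY *.
  have aD : D * delta ^+ m * `|gd| <= D * `|gd|.
    by rewrite ler_pM2r // ler_piMr.
  have a0 : 0 <= D * delta ^+ m * `|gd| by rewrite !mulr_ge0 // ltW.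
  have gdE : gd = - `|gd| by rewrite ltr0_norm // opprK.
  have [hqE|hq] := eqVneq h q; first subst h.
    rewrite /unitv eqxx (negbTE qj) subr0 mulr1 gdE mulrN.
    have /andP[B1 B2] := Bz q.
    apply/andP; split.
      by apply: lo_ok DX _.
    by apply: le_trans B2; rewrite lee_fin lerBlDr lerDl.
  have [hjE|hj] := eqVneq h jj; first subst h.
    rewrite /unitv eqxx eq_sym (negbTE qj) sub0r mulrN1 gdE opprK.
    have /andP[B1 B2] := Bz jj.
    apply/andP; split.
      by apply: le_trans B1 _; rewrite lee_fin lerDl.
    by apply: up_ok DY _.
  by rewrite /unitv (negbTE hq) (negbTE hj) subrr !mulr0 addr0; apply: Bz.
Qed.

End Box.

Theorem theorem1 (R : realType) (n : nat)
  (f : @vec R n -> R) (g : @vec R n -> @vec R n) (L : R) (Lij : 'I_n -> 'I_n -> R)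
  (b : R) (l u : 'I_n -> \bar R)
  (tau gamma delta Al Au : R)
  (x : nat -> @vec R n) (j : nat -> 'I_n) (p : nat -> {perm 'I_n})
  (z : nat -> nat -> @vec R n) (A : nat -> 'I_n -> R) (alpha : nat -> 'I_n -> R)
  (xs : @vec R n) (lam zeta : R) (kA kj kz : nat) :
  (* the problem *)
  (2 <= n)%N ->
  valid_bounds l u ->
  is_gradient f g ->
  lipschitz_grad g L ->
  pair_lipschitz g Lij ->
  (* parameters of AC2CD *)
  0 < tau <= 1 -> 0 < gamma < 1 -> 0 < delta < 1 -> 0 < Al -> Al <= Au ->
  (* the sequence produced by AC2CD from x^0 in F *)
  feasible l u b (x 0%N) ->
  AC2CD_seq f g l u tau gamma delta Al Au x j p z A alpha ->
  (* standing assumptions *)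
  level0 f l u b (x 0%N) !=set0 ->
  compactRn (level0 f l u b (x 0%N)) ->
  (forall y, level0 f l u b (x 0%N) y ->
     exists i, (l i < (y i)%:E < u i)%E) ->
  (* x^k -> xs, a stationary point with multiplier lam, A^+(xs) nonempty *)
  (forall eps : R, 0 < eps ->
     exists K : nat, forall k, (K <= k)%N -> enorm (vsub (x k) xs) < eps) ->
  stationary g l u b xs lam ->
  (exists i, active_plus g l u xs lam i) ->
  (* zeta(xs) = min over A^+(xs) of |grad_i f(xs) - lam| *)
  (exists i, active_plus g l u xs lam i /\ zeta = `|g xs i - lam|) ->
  (forall i, active_plus g l u xs lam i -> zeta <= `|g xs i - lam|) ->
  (* k_A, k_j, k_z *)
  first_such (fun m => forall k, (m <= k)%N -> forall i : 'I_n,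
      enorm (vsub (z k i) xs) <
        zeta / (2 * L + Num.max (Al^-1) (Lmax Lij / (2 * (1 - gamma))))) kA ->
  first_such (fun m => forall k, (m <= k)%N -> ~~ active l u xs (j k)) kj ->
  first_such (fun m => forall k, (m <= k)%N -> forall i : nat, (i <= n)%N ->
      (l (j k) < (z k i (j k))%:E < u (j k))%E) kz ->
  (maxn kj kz <= kA)%N ->
  forall k, (kA < k)%N -> forall h, active_plus g l u xs lam h -> x k h = xs h.
Proof.
move=> n2 Hvb Hg HL [_ [_ HLij0]] /andP[tau0 tau1] /andP[gam0 gam1] /andP[del0 del1]
  Al0 AlAu Hx0 [_ [Hz0 [Hstep Hx]]] _ _ _ _ [Hfeas Hstat] _ _ Hzmin [HkA _] [Hkj _] [Hkz _]
  Hmax k Hk h Hh.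
have HLij : forall (a b : 'I_n) y s t,
  `|dotv (g (vaxpy y s (dab a b))) (dab a b) - dotv (g (vaxpy y t (dab a b))) (dab a b)|
     <= Lij a b * `|s - t| by move=> *; exact: HLij0.
have n0 : (0 < n)%N by apply: leq_trans n2.
have L0 : 0 <= L.
  have := HL (vaxpy (fun _ => 0) 1 (unitv (Ordinal n0))) (fun _ => 0).
  rewrite vsub_vaxpy enorm_unit normr1 mulr1; apply: le_trans; exact: enorm_ge0.
have Bz : forall kk, Box l u (x kk) /\ forall i, (i <= n)%N -> Box l u (z kk i).
  have Bin kk : Box l u (x kk) -> forall i, (i <= n)%N -> Box l u (z kk i).
    move=> Bk; elim=> [|i IH] ilt; first by rewrite Hz0.
    have iltn : (i < n)%N by [].
    have := Hstep kk (Ordinal iltn); cbv zeta; case=> /andP[HA1 HA2] [m [Ham _ _]] Hzi.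
    rewrite /= in Hzi Ham; rewrite Hzi Ham.
    apply: step_box; first by apply: IH; apply: ltnW.
      exact: lt_le_trans Al0 HA1.
    by rewrite del0 del1.
  elim=> [|k' [Bk _]].
    split; first by move=> hh; apply: (proj2 Hx0).
    by apply: Bin => hh; apply: (proj2 Hx0).
  have Bk' : Box l u (x k'.+1) by rewrite Hx; apply: Bin Bk _ _.
  by split => //; apply: Bin.
case: k Hk => // k1; rewrite ltnS => Hk1.
rewrite Hx.
have kjk : (kj <= k1)%N by apply: leq_trans Hk1; apply: leq_trans Hmax; exact: leq_maxl.
have kzk : (kz <= k1)%N by apply: leq_trans Hk1; apply: leq_trans Hmax; exact: leq_maxr.
set jj := j k1.
have Hjna := Hkj k1 kjk; rewrite -/jj in Hjna.
have gj : g xs jj = lam.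
  have [_ Hin _] := Hstat jj; apply: Hin.
  have /andP[B1 B2] := proj2 Hfeas jj.
  move: Hjna; rewrite /active negb_or => /andP[nn1 nn2].
  by rewrite !lt_neqAle B1 B2 eq_sym nn1 nn2.
have Hh' := Hh; move: Hh' => /andP[Hact gne].
have hj : h != jj by apply: contraNneq Hjna => <-.
set i0 := ((p k1)^-1)%g h.
have pi0 : p k1 i0 = h by rewrite /i0 permKV.
have unch : forall i : 'I_n, p k1 i != h -> z k1 i.+1 h = z k1 i h.
  move=> i pih.
  have := Hstep k1 i; cbv zeta; case=> _ _ ->.
  by rewrite /vaxpy ddir_val /unitv eq_sym (negbTE pih) (negbTE hj) subrr !mulr0 addr0.
have main : z k1 i0.+1 h = xs h.
  have kAk : (kA <= k1)%N by [].
  have := Hstep k1 i0; cbv zeta; rewrite pi0 -/jj.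
  case=> /andP[HA1 _] [m [Ham Harm Hmin]] Hzi.
  set zi := z k1 i0 in Ham Harm Hmin Hzi.
  set r := enorm (vsub zi xs).
  have Hr := HkA k1 kAk i0; rewrite -/zi -/r in Hr.
  set M := Num.max Al^-1 (Lmax Lij / (2 * (1 - gamma))) in Hr.
  have M1 : Al^-1 <= M by rewrite le_max lexx.
  have M2 : Lmax Lij / (2 * (1 - gamma)) <= M by rewrite le_max lexx orbT.
  have Ali : 0 < Al^-1 by rewrite invr_gt0.
  have Den0 : 0 < 2 * L + M.
    by apply: lt_le_trans (lt_le_trans Ali M1) _; rewrite lerDr mulr_ge0.
  have r0 : 0 <= r by apply: enorm_ge0.
  have rD : r * (2 * L + M) < zeta by rewrite -ltr_pdivlMr.
  have rAl : r * Al^-1 <= r * M by apply: ler_wpM2l.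
  have g1m : 0 < 1 - gamma by rewrite subr_gt0.
  have rLm : Lmax Lij * r <= 2 * (1 - gamma) * (r * M).
    have : Lmax Lij <= 2 * (1 - gamma) * M.
      have g2 : 0 < 2 * (1 - gamma) by rewrite mulr_gt0.
      have -> : Lmax Lij = 2 * (1 - gamma) * (Lmax Lij / (2 * (1 - gamma))).
        by rewrite mulrC divfK // gt_eqF.
      by apply: ler_wpM2l => //; apply: ltW.
    by move=> H; rewrite [r * M]mulrC mulrA; apply: ler_wpM2r.
  have gjz := @grad_coord_lip R n g L HL zi xs jj; rewrite -/r gj in gjz.
  have ghz := @grad_coord_lip R n g L HL zi xs h; rewrite -/r in ghz.
  have zhd := abs_coord_le (vsub zi xs) h; rewrite -/r /vsub in zhd.
  move: gjz ghz zhd; rewrite !ler_norml => /andP[gj1 gj2] /andP[gh1 gh2] /andP[zh1 zh2].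
  have Lmx a b' : Lij a b' <= Lmax Lij.
    apply: le_trans (le_bigmax _ (fun j' => Lij a j') b') _.
    exact: (le_bigmax _ (fun i' => \big[Num.max/0]_(j' < n) Lij i' j') a).
  have Bzi := (proj2 (Bz k1)) i0 (ltnW (ltn_ord i0)); rewrite -/zi in Bzi.
  have Kz1 := Hkz k1 kzk i0.+1 (ltn_ord i0); rewrite -/jj in Kz1.
  have HA0 : 0 < A k1 i0 by apply: lt_le_trans HA1.
  set gd := gdir g zi jj h in Ham Harm Hmin Hzi.
  have gdE : gd = g zi jj - g zi h by [].
  move: Hact; rewrite /active => /orP[/eqP El|/eqP Eu].
  -
    have [Hs _ _] := Hstat h.
    have gh : lam < g xs h by rewrite lt_neqAle eq_sym gne Hs.
    have zg : zeta <= g xs h - lam by rewrite -(gtr0_norm (x := g xs h - lam)) ?subr_gt0 // Hzmin.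
    have gn : gd < 0 by rewrite gdE; nra.
    have ga : `|gd| = - gd by rewrite ltr0_norm.
    have gap : 0 < `|gd| by rewrite normr_gt0 lt_eqF.
    have gal : zeta - 2 * L * r <= `|gd| by rewrite ga gdE; lra.
    set x0 := zi h - xs h.
    have x00 : 0 <= x0 by move: (Bzi h) => /andP[+ _]; rewrite -El lee_fin subr_ge0.
    have AB : alpha_bar l u g zi jj h =
              (Order.min x0%:E (u jj - (zi jj)%:E) * (`|gd|^-1)%:E)%E.
      rewrite /alpha_bar; cbv zeta; rewrite -/gd.
      have -> : (0 < gd) = false by apply/negbTE; rewrite -leNgt ltW.
      by rewrite gn -El -EFinB.
    set D := fine _ in Ham Harm Hmin Hzi.
    have DE : D = fine (Order.min (Order.min x0%:E (u jj - (zi jj)%:E) * (`|gd|^-1)%:E)%E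
                          (A k1 i0)%:E) by rewrite /D AB.
    have Y0 : (0 <= u jj - (zi jj)%:E)%E by apply: sub_ge0E; case/andP: (Bzi jj).
    have [D0 _ DX _] := box_alpha _ _ _ _ (x00 : (0 <= x0%:E)%E) Y0 gap HA0.
    rewrite -DE lee_fin in D0 DX.
    have Lab0 : 0 <= Lij jj h.
      have := HLij jj h zi 1 0; rewrite subr0 normr1 mulr1; apply: le_trans; exact: normr_ge0.
    have rMg : r * M <= `|gd| by lra.
    have Lab : Lij jj h * D <= 2 * (1 - gamma).
      have P1 : Lij jj h * (D * `|gd|) <= Lij jj h * x0 by apply: ler_wpM2l.
      have P2 : Lij jj h * x0 <= Lmax Lij * r by apply: ler_pM => //; lra.
      have P3 : 2 * (1 - gamma) * (r * M) <= 2 * (1 - gamma) * `|gd|.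
        by apply: ler_wpM2l => //; rewrite mulr_ge0 // ltW.
      rewrite -(ler_pM2r gap) -mulrA.
      by apply: le_trans P1 _; apply: le_trans P2 _; apply: le_trans rLm _.
    have Hdd : ddir g zi jj h = (fun k => `|gd| * dab jj h k).
      by apply/funext => k; rewrite ddir_val -/gd ga /dab; ring.
    have jh : jj != h by rewrite eq_sym.
    have gE : g zi jj - g zi h = - `|gd| by rewrite ga opprK.
    have Harm0 := @armijo_ok R n f g L Hg HL L0 Lij HLij zi jj h `|gd| D gamma
       jh gap D0 Lab gE.
    case: m Ham Harm Hmin => [|m'] Ham Harm Hmin; last first.
      by exfalso; apply: (Hmin 0%N isT); rewrite expr0 mulr1 Hdd.
    rewrite expr0 mulr1 in Ham.
    rewrite Hzi Ham in Kz1 *.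
    move: Kz1 => /andP[_ Kz1].
    rewrite /vaxpy ddir_val -/gd /unitv eqxx eq_sym (negbTE hj) sub0r mulrN1 -ga in Kz1.
    have Dlt := up_lt _ _ _ Kz1.
    have xA : x0 / `|gd| <= A k1 i0.
      apply: le_trans HA1; rewrite ler_pdivrMr //.
      have : r * Al^-1 < `|gd| by lra.
      rewrite -ltr_pdivlMr // invrK mulrC => H; apply: le_trans zh2 _; exact: ltW.
    have DEq := exact_alpha _ _ _ _ x00 Y0 gap xA; rewrite -DE in DEq.
    rewrite /vaxpy ddir_val -/gd /unitv eqxx (negbTE hj) subr0 mulr1 (DEq Dlt).
    rewrite ga /x0; field.
    by rewrite lt_eqF.
  -
    have [_ _ Hs] := Hstat h.
    have gh : g xs h < lam by rewrite lt_neqAle gne Hs.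
    have zg : zeta <= lam - g xs h.
      by rewrite -opprB -(ltr0_norm (x := g xs h - lam)) ?subr_lt0 // Hzmin.
    have rM0 : 0 <= r * M by rewrite mulr_ge0 // ltW // (lt_le_trans Ali M1).
    have gp : 0 < gd by rewrite gdE; lra.
    have gal : zeta - 2 * L * r <= gd by rewrite gdE; lra.
    set x0 := xs h - zi h.
    have x0r : x0 <= r by rewrite /x0; lra.
    have x00 : 0 <= x0 by move: (Bzi h) => /andP[_]; rewrite -Eu lee_fin subr_ge0.
    have AB : alpha_bar l u g zi jj h =
              (Order.min x0%:E ((zi jj)%:E - l jj) * (gd^-1)%:E)%E.
      by rewrite /alpha_bar; cbv zeta; rewrite -/gd gp -Eu -EFinB.
    set D := fine _ in Ham Harm Hmin Hzi.
    have DE : D = fine (Order.min (Order.min x0%:E ((zi jj)%:E - l jj) * (gd^-1)%:E)%E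
                          (A k1 i0)%:E) by rewrite /D AB.
    have Y0 : (0 <= (zi jj)%:E - l jj)%E by apply: sub_ge0E'; case/andP: (Bzi jj).
    have [D0 _ DX _] := box_alpha _ _ _ _ (x00 : (0 <= x0%:E)%E) Y0 gp HA0.
    rewrite -DE lee_fin in D0 DX.
    have Lab0 : 0 <= Lij h jj.
      have := HLij h jj zi 1 0; rewrite subr0 normr1 mulr1; apply: le_trans; exact: normr_ge0.
    have rMg : r * M <= gd by lra.
    have Lab : Lij h jj * D <= 2 * (1 - gamma).
      have P1 : Lij h jj * (D * gd) <= Lij h jj * x0 by apply: ler_wpM2l.
      have P2 : Lij h jj * x0 <= Lmax Lij * r by apply: ler_pM => //.
      have P3 : 2 * (1 - gamma) * (r * M) <= 2 * (1 - gamma) * gd.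
        by apply: ler_wpM2l => //; rewrite mulr_ge0 // ltW.
      rewrite -(ler_pM2r gp) -mulrA.
      by apply: le_trans P1 _; apply: le_trans P2 _; apply: le_trans rLm _.
    have Hdd : ddir g zi jj h = (fun k => gd * dab h jj k) by apply/funext.
    have gE : g zi h - g zi jj = - gd by rewrite gdE opprB.
    have Harm0 := @armijo_ok R n f g L Hg HL L0 Lij HLij zi h jj gd D gamma
       hj gp D0 Lab gE.
    case: m Ham Harm Hmin => [|m'] Ham Harm Hmin; last first.
      by exfalso; apply: (Hmin 0%N isT); rewrite expr0 mulr1 Hdd.
    rewrite expr0 mulr1 in Ham.
    rewrite Hzi Ham in Kz1 *.
    move: Kz1 => /andP[Kz1 _].
    rewrite /vaxpy ddir_val -/gd /unitv eqxx eq_sym (negbTE hj) sub0r mulrN1 mulrN in Kz1.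
    have Dlt := lo_lt _ _ _ Kz1.
    have xA : x0 / gd <= A k1 i0.
      apply: le_trans HA1; rewrite ler_pdivrMr //.
      have : r * Al^-1 < gd by lra.
      rewrite -ltr_pdivlMr // invrK mulrC => H; apply: le_trans x0r _; exact: ltW.
    have DEq := exact_alpha _ _ _ _ x00 Y0 gp xA; rewrite -DE in DEq.
    rewrite /vaxpy ddir_val -/gd /unitv eqxx (negbTE hj) subr0 mulr1 (DEq Dlt).
    rewrite /x0; field.
    by rewrite gt_eqF.
have tail : forall i, (i0 < i)%N -> (i <= n)%N -> z k1 i h = xs h.
  elim=> [//|i IH] lti lein.
  have [ei|nei] := eqVneq i i0; first by rewrite ei.
  have i0i : (i0 < i)%N by rewrite ltn_neqAle eq_sym nei -ltnS.
  have iltn : (i < n)%N by [].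
  have := unch (Ordinal iltn); rewrite /= => ->; first by apply: IH => //; apply: ltnW.
  apply: contra_neq nei => E.
  by rewrite /i0 -E permK.
exact: tail (ltn_ord i0) (leqnn n).
Qed.
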